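(* Let $\mathcal{E}=(\mathbf{R},\mathbf{S},\Sigma_{st},\mathbf{F})$ be a constructive relational to RDF data exchange setting in which every st-tgd head is a single atom, with $\mathbf{R}=(\mathcal{R},\Sigma_{fd})$ and $\mathbf{S}=(\mathcal{T},\delta)$. For any $(T,f)\in\mathcal{T}\times\mathcal{F}$: $(T,f)$ is accessible in $\mathcal{E}$ if and only if there exist an instance $I$ of $\mathcal{R}$ (not necessarily satisfying $\Sigma_{fd}$) and a tuple $\bar a$ of constants in the active domain of $I$ such that the core pre-solution for $I$ to $\mathcal{E}$ contains the fact $T(f^F(\bar a))$.
   Context: Values: $\mathsf{Iri}$ (IRIs, containing predicates $\mathsf{Pred}$), $\mathsf{NullIri}$, $\mathsf{Lit}$ with null literals $\mathsf{NullLit}\subseteq\mathsf{Lit}$; non-null values are constants. $\mathbf{R}=(\mathcal{R},\Sigma_{fd})$: relation names with arities and functional dependencies; an instance of $\mathcal{R}$ assigns finite sets of tuples of non-null literals to relation names. A deterministic shape schema $\mathbf{S}=(\mathcal{T},\delta)$ has a partial function $\delta:\mathcal{T}\times\mathsf{Pred}\to(\mathcal{T}\cup\{\mathit{Literal}\})\times\{1,?,*,+\}$, written $\delta(T,p)=S^\mu$. An IRI constructor library $\mathbf{F}=(\mathcal{F},F)$ interprets each $n$-ary $f\in\mathcal{F}$ as $f^F:\mathsf{Lit}^n\to\mathsf{Iri}$ (constants); constructive means: ranges of distinct constructors are disjoint and all st-tgds are full, of the form $\forall\bar x.\,\varphi\Rightarrow\psi$ with $\varphi$ a conjunction of atoms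 over $\mathcal{R}$ and $\psi$ an atom $\mathit{Triple}(t_1,p,t_2)$ ($p\in\mathsf{Pred}$), $T(t)$ or $\mathit{Literal}(t)$, with terms variables or $f(\bar u)$ for a tuple of variables $\bar u$. The core pre-solution of $I$ is the least set $J_0$ of facts containing, for every st-tgd and every assignment $g$ of its variables making its body true in $I$, the head atom with terms evaluated ($f(\bar u)\mapsto f^F(g(\bar u))$), and closed under: $T(a),\mathit{Triple}(a,p,b)\in J_0$ and $\delta(T,p)=S^\mu$ imply $S(b)\in J_0$. $(T,f)$ is accessible in $\mathcal{E}$ (with the sequence $\sigma_0,\dots,\sigma_n$ of st-tgds) if there are types $T_0,\dots,T_n$, constructors $f_0,\dots,f_n$, predicates $p_1,\dots,p_n$ and tuples of variables $\bar x_i,\bar y_i$ such that the head of $\sigma_0$ is $T_0(f_0(\bar y_0))$, the head of $\sigma_i$ is $\mathit{Triple}(f_{i-1}(\bar x_i),p_i,f_i(\bar y_i))$ for $1\le i\le n$, $\delta(T_{i-1},p_i)=T_i^{\mu_i}$ for some $\mu_i$ for $1\le i\le n$, and $T=T_n$, $f=f_n$.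
   Formalization: In every st-tgd, the term t of a head T(t) and the subject t₁ of a head Triple(t₁,p,t₂) are constructor terms f(ū), never variables. The paper assumes this as well. *)

(* Defs.v *)
From Stdlib Require Import List.
Import ListNotations.
Set Implicit Arguments.

Inductive mult : Type := MOne | MOpt | MStar | MPlus.

Inductive shape_target (TName : Type) : Type :=
  | STType (S : TName)
  | STLiteral.
Arguments STType {TName}.
Arguments STLiteral {TName}.

Inductive term (FName : Type) : Type :=
  | TVar (x : nat)
  | TFun (f : FName) (us : list nat).
Arguments TVar {FName}.
Arguments TFun {FName}.

Inductive head_atom (Pred TName FName : Type) : Type :=
  | HTriple (t1 : term FName) (p : Pred) (t2 : term FName)
  | HType (T : TName) (t : term FName)
  | HLiteral (t : term FName).
Arguments HTriple {Pred TName FName}.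
Arguments HType {Pred TName FName}.
Arguments HLiteral {Pred TName FName}.

(** Full st-tgd  forall xs. body => head  (body a conjunction of relational atoms
    R(x1..xk), variables are natural numbers). *)
Record tgd (RName Pred TName FName : Type) : Type := mkTgd {
  body : list (RName * list nat);
  head : head_atom Pred TName FName
}.

Record setting : Type := mkSetting {
  Iri : Type;
  Lit : Type;
  Pred : Type;
  pred_iri : Pred -> Iri;             (* Pred is a subset of Iri *)
  NullIri : Iri -> Prop;
  NullLit : Lit -> Prop;
  RName : Type;
  rarity : RName -> nat;
  fds : list (RName * list nat * list nat);  (* R : X -> Y, positions *)
  TName : Type;
  delta : TName -> Pred -> option (shape_target TName * mult);
  FName : Type;
  farity : FName -> nat;
  finterp : FName -> list Lit -> Iri;
  stgds : list (tgd RName Pred TName FName)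
}.

Section Defs.
Variable E : setting.

Inductive value : Type :=
  | VIri (i : Iri E)
  | VLit (l : Lit E).

Inductive fact : Type :=
  | FTriple (a : value) (p : Pred E) (b : value)
  | FType (T : TName E) (a : value)
  | FLiteral (a : value).

(** An instance of the relational schema: finitely many tuples of non-null
    literals of the right arity per relation name (functional dependencies
    are NOT required). *)
Record instance : Type := mkInstance { rel : RName E -> list (list (Lit E)) }.

Definition wf_instance (I : instance) : Prop :=
  forall R t, In t (rel I R) ->
    length t = rarity E R /\ Forall (fun l => ~ NullLit E l) t.

Definition adom (I : instance) (l : Lit E) : Prop :=
  exists R t, In t (rel I R) /\ In l t.

Definition term_vars (t : term (FName E)) : list nat :=
  match t with TVar x => [x] | TFun f us => us end.

Definition head_vars (h : head_atom (Pred E) (TName E) (FName E)) : list nat :=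
  match h with
  | HTriple t1 _ t2 => term_vars t1 ++ term_vars t2
  | HType _ t => term_vars t
  | HLiteral t => term_vars t
  end.

Definition is_fun_term (t : term (FName E)) : Prop :=
  match t with TFun _ _ => True | TVar _ => False end.

Definition constructive : Prop :=
  (forall f args, length args = farity E f -> ~ NullIri E (finterp E f args)) /\
  (forall f g a b, f <> g -> length a = farity E f -> length b = farity E g ->
       finterp E f a <> finterp E g b) /\
  (forall s, In s (stgds E) -> forall x, In x (head_vars (head s)) ->
       exists A, In A (body s) /\ In x (snd A)).

Definition wf_term (t : term (FName E)) : Prop :=
  match t with TVar _ => True | TFun f us => length us = farity E f end.

Definition wf_head (h : head_atom (Pred E) (TName E) (FName E)) : Prop :=
  match h with
  | HTriple t1 _ t2 => wf_term t1 /\ wf_term t2 /\ is_fun_term t1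
  | HType _ t => wf_term t /\ is_fun_term t
  | HLiteral t => wf_term t
  end.

Definition wf_setting : Prop :=
  (exists c : Lit E, ~ NullLit E c) /\
  (forall s, In s (stgds E) ->
     wf_head (head s) /\
     (forall A, In A (body s) -> length (snd A) = rarity E (fst A))).

Definition eval_term (g : nat -> Lit E) (t : term (FName E)) : value :=
  match t with
  | TVar x => VLit (g x)
  | TFun f us => VIri (finterp E f (map g us))
  end.

Definition eval_head (g : nat -> Lit E) (h : head_atom (Pred E) (TName E) (FName E)) : fact :=
  match h with
  | HTriple t1 p t2 => FTriple (eval_term g t1) p (eval_term g t2)
  | HType T t => FType T (eval_term g t)
  | HLiteral t => FLiteral (eval_term g t)
  end.

Definition body_true (I : instance) (g : nat -> Lit E) (b : list (RName E * list nat)) : Prop :=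
  forall A, In A b -> In (map g (snd A)) (rel I (fst A)).

Inductive core_presol (I : instance) : fact -> Prop :=
  | cp_tgd : forall s g, In s (stgds E) -> body_true I g (body s) ->
      core_presol I (eval_head g (head s))
  | cp_type : forall T a p b S mu,
      core_presol I (FType T a) -> core_presol I (FTriple a p b) ->
      delta E T p = Some (STType S, mu) -> core_presol I (FType S b)
  | cp_lit : forall T a p b mu,
      core_presol I (FType T a) -> core_presol I (FTriple a p b) ->
      delta E T p = Some (STLiteral, mu) -> core_presol I (FLiteral b).

(** Accessibility of (T,f): existence of a chain sigma_0, ..., sigma_n of
    st-tgds as in the paper, given inductively by its length. *)
Inductive accessible : TName E -> FName E -> Prop :=
  | acc_base : forall s T f ys,
      In s (stgds E) -> head s = HType T (TFun f ys) -> accessible T f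
  | acc_step : forall s T f xs p T' f' ys mu,
      accessible T f ->
      In s (stgds E) -> head s = HTriple (TFun f xs) p (TFun f' ys) ->
      delta E T p = Some (STType T', mu) ->
      accessible T' f'.

End Defs.
Arguments VIri {E}.
Arguments VLit {E}.
Arguments FTriple {E}.
Arguments FType {E}.
Arguments FLiteral {E}.
Arguments mkInstance {E}.

(* Main.v *)
Require Import Defs.
From Stdlib Require Import List Classical.
Import ListNotations.

Lemma same_fun (E : setting) (Hc : constructive E) f g a b :
  length a = farity E f -> length b = farity E g ->
  finterp E f a = finterp E g b -> f = g.
Proof.
  intros Ha Hb He. apply NNPP; intro Hn.
  destruct Hc as [_ [Hd _]]. exact (Hd f g a b Hn Ha Hb He).
Qed.

Lemma triple_inv (E : setting) (I : instance E) a p b :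
  core_presol I (FTriple a p b) ->
  exists s g, In s (stgds E) /\ eval_head E g (Defs.head s) = FTriple a p b.
Proof.
  intro H. remember (FTriple a p b) as F eqn:HF.
  destruct H as [s g Hs Hb | | ]; try discriminate.
  exists s, g. split; [exact Hs | first [exact HF | reflexivity | exact (eq_sym HF)]].
Qed.

Lemma back (E : setting) (Hc : constructive E) (Hwf : wf_setting E) (I : instance E) F :
  core_presol I F -> forall T f a, F = FType T (VIri (finterp E f a)) ->
  length a = farity E f -> accessible E T f.
Proof.
  induction 1 as [s g Hs Hb | T0 a0 p b S mu H1 IH1 H2 _ Hd | T1 a1 p1 b1 mu1 H3 IH3 H4 IH4 Hd1];
    intros T f a HF Ha; try discriminate.
  - destruct Hwf as [_ Hw]. destruct (Hw s Hs) as [Hh _].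
    destruct (Defs.head s) as [t1 p t2 | T' t | t] eqn:Heq; simpl in HF; try discriminate.
    destruct t as [x | f' us]; simpl in HF; try discriminate.
    injection HF as -> Hi. simpl in Hh. destruct Hh as [Hl _].
    assert (f' = f) as ->.
    { eapply same_fun; [exact Hc | | exact Ha | exact Hi].
      rewrite length_map; exact Hl. }
    eapply acc_base; eauto.
  - injection HF as -> ->.
    destruct (triple_inv _ _ _ _ _ H2) as [s [g [Hs He]]].
    destruct Hwf as [_ Hw]. destruct (Hw s Hs) as [Hh _].
    destruct (Defs.head s) as [t1 p' t2 | T' t | t] eqn:Heq; simpl in He; try discriminate.
    injection He as He1 -> He2. simpl in Hh. destruct Hh as [Hw1 [Hw2 Hf1]].
    destruct t1 as [x | f0 xs]; simpl in Hf1; try contradiction.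
    destruct t2 as [y | f' ys]; simpl in He2; try discriminate.
    injection He2 as He2. simpl in He1. simpl in Hw1, Hw2.
    assert (f' = f) as ->.
    { eapply same_fun; [exact Hc | | exact Ha | exact He2].
      rewrite length_map; exact Hw2. }
    eapply acc_step; [ | exact Hs | exact Heq | exact Hd].
    eapply IH1; [ rewrite <- He1; reflexivity | rewrite length_map; exact Hw1].
Qed.

Section Fwd.
Variable E : setting.
Variable c : Lit E.

Definition Ic : instance E := mkInstance (fun R => [repeat c (rarity E R)]).

Lemma body_c (Hwf : wf_setting E) s : In s (stgds E) ->
  body_true Ic (fun _ => c) (body s).
Proof.
  intros Hs A HA. destruct Hwf as [_ Hw]. destruct (Hw s Hs) as [_ Hl].
  simpl. left. rewrite <- (Hl A HA). clear.
  induction (snd A); simpl; congruence.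
Qed.

Lemma map_c (l : list nat) : map (fun _ => c) l = repeat c (length l).
Proof. induction l; simpl; congruence. Qed.

Lemma fwd (Hwf : wf_setting E) T f : accessible E T f ->
  core_presol Ic (FType T (VIri (finterp E f (repeat c (farity E f))))).
Proof.
  induction 1 as [s T f ys Hs Hh | s T f xs p T' f' ys mu _ IH Hs Hh Hd].
  - pose proof (@cp_tgd E Ic s (fun _ => c) Hs (body_c Hwf _ Hs)) as H.
    rewrite Hh in H. simpl in H. rewrite map_c in H.
    destruct Hwf as [_ Hw]. destruct (Hw s Hs) as [Hw' _]. rewrite Hh in Hw'.
    simpl in Hw'. destruct Hw' as [Hl _]. rewrite Hl in H. exact H.
  - pose proof (@cp_tgd E Ic s (fun _ => c) Hs (body_c Hwf _ Hs)) as H.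
    rewrite Hh in H. simpl in H. rewrite !map_c in H.
    destruct Hwf as [_ Hw]. destruct (Hw s Hs) as [Hw' _]. rewrite Hh in Hw'.
    simpl in Hw'. destruct Hw' as [Hl1 [Hl2 _]]. rewrite Hl1, Hl2 in H.
    eapply cp_type; eauto.
Qed.
End Fwd.

Lemma acc_adom (E : setting) (Hc : constructive E) (Hwf : wf_setting E) c T f :
  accessible E T f -> 0 < farity E f -> adom (Ic E c) c.
Proof.
  induction 1 as [s T f ys Hs Hh | s T f xs p T' f' ys mu _ IH Hs Hh Hd]; intro Hpos;
  destruct Hwf as [_ Hw]; destruct (Hw s Hs) as [Hw' _]; rewrite Hh in Hw'; simpl in Hw'.
  - destruct Hw' as [Hl _].
    destruct ys as [|y ys]; [simpl in Hl; rewrite <- Hl in Hpos; inversion Hpos|].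
    destruct Hc as [_ [_ Hf]].
    destruct (Hf s Hs y) as [A [HA Hy]]; [rewrite Hh; simpl; auto|].
    destruct (Hw s Hs) as [_ Hlen].
    exists (fst A), (repeat c (rarity E (fst A))). split; [simpl; auto|].
    rewrite <- (Hlen A HA). destruct (snd A); [inversion Hy | simpl; auto].
  - destruct Hw' as [_ [Hl _]].
    destruct ys as [|y ys]; [simpl in Hl; rewrite <- Hl in Hpos; inversion Hpos|].
    destruct Hc as [_ [_ Hf]].
    destruct (Hf s Hs y) as [A [HA Hy]]; [rewrite Hh; simpl; rewrite in_app_iff; simpl; auto|].
    destruct (Hw s Hs) as [_ Hlen].
    exists (fst A), (repeat c (rarity E (fst A))). split; [simpl; auto|].
    rewrite <- (Hlen A HA). destruct (snd A); [inversion Hy | simpl; auto].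
Qed.

Theorem lemma1 (E : setting) (Hc : constructive E) (Hwf : wf_setting E)
    (T : TName E) (f : FName E) :
  accessible E T f <->
  exists (I : instance E) (a : list (Lit E)),
    wf_instance I /\
    length a = farity E f /\
    Forall (fun l => ~ NullLit E l /\ adom I l) a /\
    core_presol I (FType T (VIri (finterp E f a))).
Proof.
  split.
  - intro Hacc. pose proof Hwf as Hwf0. destruct Hwf0 as [[c Hcn] Hw].
    exists (Ic E c), (repeat c (farity E f)).
    split; [|split; [apply repeat_length|split]].
    + intros R t Ht. simpl in Ht. destruct Ht as [<- | []].
      split; [apply repeat_length|]. apply Forall_forall.
      intros x Hx. apply repeat_spec in Hx. subst; exact Hcn.
    + apply Forall_forall. intros x Hx.
      destruct (farity E f) eqn:Ha; [inversion Hx|].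
      apply repeat_spec in Hx; subst. split; [exact Hcn|].
      apply (@acc_adom E Hc Hwf c T f Hacc). rewrite Ha. apply PeanoNat.Nat.lt_0_succ.
    + apply fwd; assumption.
  - intros [I [a [_ [Ha [_ H]]]]]. eapply back; eauto.
Qed.
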